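(* There is a sufficiently small absolute constant $c_1>0$ such that the following holds for $d$ sufficiently large. Let $K=\exp(c_1 s)$. For any fixed $\mathbf{A}\in\mathcal{A}_{\mathsf{suc}}$ and any fixed unit vectors $\mathbf{y}_1,\dots,\mathbf{y}_K\in\mathbb{S}^d$, $$\Pr_{\mathbf{v}\sim\frac1{\sqrt d}\mathcal{H}_d}\Big[\|\mathbf{A}\mathbf{x}_{\mathbf{A},\mathbf{v}}\|_\infty\le\xi'\ \wedge\ \|\mathbf{x}_{\mathbf{A},\mathbf{v}}-\mathbf{y}_i\|_2>d^{-8}\ \ \forall i\in[K]\Big]\ge\frac18.$$
   Context: Setting: $d$ large, $\delta\in(0,1)$, $k=d^{1-\delta-o(1)}$, $s=d^{1-\delta/2}\log^2 d$, $\xi=2\exp(-\log^5 d)$, $\xi'=\sqrt d\xi$, $\mathcal{H}_d=\{-1,1\}^d$, $\mathbb{S}^d$ the unit sphere in $\mathbb{R}^d$. A fixed deterministic $(k,n)$-protocol for the correlated orthogonal vector game is given: Alice, on $\mathbf{A}\in\{-1,1\}^{(d/2)\times d}$, sends $\mathbf{M}_\mathbf{A}\in\{0,1\}^{kd}$; after receiving Bob's $\mathbf{v}\in\frac1{\sqrt d}\mathcal{H}_d$, she sends $\mathbf{R}_{\mathbf{A},\mathbf{v}}=(\mathbf{r}_1,\dots,\mathbf{r}_n)$ with each $\mathbf{r}_i$ a row of $\mathbf{A}$ or $\mathsf{nil}$; Bob outputs $\mathbf{x}_{\mathbf{M},\mathbf{v},\mathbf{R}}\in\mathbb{S}^d$,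 a unit vector defined for every $\mathbf{M}\in\{0,1\}^{kd}$, $\mathbf{v}$, $\mathbf{R}\in(\{-1,1\}^d\cup\{\mathsf{nil}\})^n$. Write $\mathbf{x}_{\mathbf{A},\mathbf{v}}=\mathbf{x}_{\mathbf{M}_\mathbf{A},\mathbf{v},\mathbf{R}_{\mathbf{A},\mathbf{v}}}$. The protocol succeeds on $(\mathbf{A},\mathbf{v})$ if $\|\mathbf{A}\mathbf{x}_{\mathbf{A},\mathbf{v}}\|_\infty\le\xi'$ and $|\langle\mathbf{v},\mathbf{x}_{\mathbf{A},\mathbf{v}}\rangle|\ge\sqrt{s/d}$, and it succeeds with probability at least $1/2$ over uniform $(\mathbf{A},\mathbf{v})$. $\mathcal{A}_{\mathsf{suc}}$ is the set of $\mathbf{A}\in\{-1,1\}^{(d/2)\times d}$ on which the protocol succeeds with probability at least $1/4$ over uniform $\mathbf{v}\in\frac1{\sqrt d}\mathcal{H}_d$. *)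

(* Defs.v *)
From HB Require Import structures.
From mathcomp Require Import all_boot all_order all_algebra.
From mathcomp Require Import reals sequences exp Rstruct.
Set Implicit Arguments. Unset Strict Implicit. Unset Printing Implicit Defensive.
Import Order.TTheory GRing.Theory Num.Theory.
Local Open Scope ring_scope.

Notation RR := Rdefinitions.R.

(* Boolean hypercube {-1,1}^d : true <-> +1, false <-> -1. *)
Definition hc (d : nat) := {ffun 'I_d -> bool}.
Definition sgn (b : bool) : RR := if b then 1 else -1.

(* A in {-1,1}^{(d/2) x d}, stored as its d/2 rows. *)
Definition mat (d : nat) := {ffun 'I_(d./2) -> hc d}.

Definition vec_of d (h : hc d) : 'I_d -> RR := fun j => sgn (h j) / Num.sqrt (d%:R).

Definition norm2 d (x : 'I_d -> RR) : RR := Num.sqrt (\sum_(j < d) x j ^+ 2).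
Definition dotp d (u x : 'I_d -> RR) : RR := \sum_(j < d) u j * x j.
Definition mulAx d (A : mat d) (x : 'I_d -> RR) : 'I_(d./2) -> RR :=
  fun i => \sum_(j < d) sgn (A i j) * x j.
Definition infnorm m (y : 'I_m -> RR) : RR := \big[Num.max/0]_(i < m) `|y i|.

Definition s_par (delta : RR) (d : nat) : RR :=
  powR (d%:R) (1 - delta / 2) * (ln (d%:R)) ^+ 2.
Definition xi (d : nat) : RR := 2 * expR (- (ln (d%:R)) ^+ 5).
Definition xi' (d : nat) : RR := Num.sqrt (d%:R) * xi d.

(* A deterministic (k,n)-protocol for the correlated orthogonal vector game.
   Alice's message M_A in {0,1}^{kd}; her second message R_{A,v} consists of n
   entries, each a row of A or nil (= None); Bob's output is a unit vector
   defined for every (M, v, R). *)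
Record protocol (d k n : nat) := Protocol {
  msg : mat d -> {ffun 'I_(k * d) -> bool};
  resp : mat d -> hc d -> {ffun 'I_n -> option (hc d)};
  resp_rows : forall A v i,
    match resp A v i with Some r => exists j, r = A j | None => True end;
  out : {ffun 'I_(k * d) -> bool} -> hc d -> {ffun 'I_n -> option (hc d)} ->
        'I_d -> RR;
  out_unit : forall M v R, norm2 (out M v R) = 1
}.

Definition xAv d k n (P : protocol d k n) (A : mat d) (v : hc d) : 'I_d -> RR :=
  out P (msg P A) v (resp P A v).

Definition succeeds (delta : RR) d k n (P : protocol d k n) (A : mat d) (v : hc d) : bool :=
  (infnorm (mulAx A (xAv P A v)) <= xi' d) &&
  (Num.sqrt (s_par delta d / d%:R) <= `|dotp (vec_of v) (xAv P A v)|).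

Definition prob_v d (p : pred (hc d)) : RR :=
  (#|[pred v | p v]|)%:R / (#|{: hc d}|)%:R.
Definition prob_Av d (p : pred (mat d * hc d)) : RR :=
  (#|[pred Av | p Av]|)%:R / (#|{: mat d * hc d}|)%:R.

Definition A_suc (delta : RR) d k n (P : protocol d k n) : pred (mat d) :=
  fun A => 1 / 4 <= prob_v (succeeds delta P A).

(* Main.v *)
Require Import Defs.
From Stdlib Require Import Reals Lra.
From Coquelicot Require Import Coquelicot.
Module StdPart.
Local Open Scope R_scope.

Lemma w_ge0 (x : R) : 0 <= x -> 0 <= x * (exp x + exp (-x)) - (exp x - exp (-x)).
Proof.
intros Hx.
set (f := fun y => y * (exp y + exp (-y)) - (exp y - exp (-y))).
assert (Hd : forall y : R, is_derive f y (y * (exp y - exp (-y)))).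
{ intros y; unfold f; auto_derive; [exact I| ring]. }
destruct (MVT_gen f 0 x (fun y => y * (exp y - exp (-y)))) as [c [Hc E]].
- intros; apply Hd.
- intros y _. apply continuity_pt_filterlim. apply (ex_derive_continuous (K:=R_AbsRing) (V:=R_NormedModule)).
  eexists; apply Hd.
- rewrite Rmin_left in Hc by lra; rewrite Rmax_right in Hc by lra.
  change (0 <= f x). assert (f 0 = 0) by (unfold f; rewrite Ropp_0; ring).
  assert (exp (-c) <= exp c).
  { destruct (Req_dec c 0). subst; rewrite Ropp_0; lra. left; apply exp_increasing; lra. }
  assert (0 <= c * (exp c - exp (-c))) by (apply Rmult_le_pos; lra).
  assert (0 <= c * (exp c - exp (-c)) * (x - 0)) by (apply Rmult_le_pos; lra).
  lra.
Qed.

Lemma cosh_le0 (x : R) : 0 <= x -> exp x + exp (-x) <= 2 * exp (x^2/2).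
Proof.
intros Hx.
set (f := fun y => (exp y + exp (-y)) * exp (-(y^2/2))).
set (df := fun y => - (y * (exp y + exp (-y)) - (exp y - exp (-y))) * exp (-(y^2/2))).
assert (Hd : forall y : R, is_derive f y (df y)).
{ intros y; unfold f, df; auto_derive; [exact I| change RinvImpl.Rinv with Rinv; replace (- (y * (y * 1) * / 2)) with (- (y ^ 2 / 2)) by field; field]. }
destruct (MVT_gen f 0 x df) as [c [Hc E]].
- intros; apply Hd.
- intros y _. apply continuity_pt_filterlim. apply (ex_derive_continuous (K:=R_AbsRing) (V:=R_NormedModule)).
  eexists; apply Hd.
- rewrite Rmin_left in Hc by lra; rewrite Rmax_right in Hc by lra.
  assert (f 0 = 2) by (unfold f; rewrite Ropp_0, exp_0; replace (-(0^2/2)) with 0 by field; rewrite exp_0; ring).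
  assert (Hw := w_ge0 c (proj1 Hc)).
  assert (0 < exp (-(c^2/2))) by apply exp_pos.
  assert (df c <= 0) by (unfold df; nra).
  assert (f x <= 2) by nra.
  unfold f in H2.
  assert (exp (-(x^2/2)) * exp (x^2/2) = 1) by (rewrite <- exp_plus; replace (-(x^2/2) + x^2/2) with 0 by ring; apply exp_0).
  assert (0 < exp (x^2/2)) by apply exp_pos.
  nra.
Qed.

Lemma cosh_le (x : R) : exp x + exp (-x) <= 2 * exp (x^2/2).
Proof.
destruct (Rle_dec 0 x). now apply cosh_le0.
assert (H := cosh_le0 (-x)). rewrite Ropp_involutive in H.
replace ((-x)^2) with (x^2) in H by ring. assert (0 <= -x) by lra. specialize (H H0). lra.
Qed.
End StdPart.
From HB Require Import structures.
From mathcomp Require Import all_boot all_order all_algebra.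
From mathcomp Require Import Rstruct Rstruct_topology reals sequences exp.
From mathcomp Require Import lra ring.
Import Order.TTheory GRing.Theory Num.Theory.
Local Open Scope ring_scope.

Lemma cosh_leR (x : RR) : expR x + expR (- x) <= 2 * expR (x ^+ 2 / 2).
Proof.
have := StdPart.cosh_le x. rewrite !RexpE => /RleP.
rewrite RpowE. done.
Qed.

Lemma count_union (T I : finType) (S Tp : pred T) (B : I -> pred T) :
  (forall h, S h -> Tp h \/ exists i, B i h) ->
  (#|[pred h | S h]| <= #|[pred h | Tp h]| + \sum_i #|[pred h | B i h]|)%N.
Proof.
move=> H.
rewrite -!sum1_card.
under [X in (_ <= _ + X)%N]eq_bigr do rewrite -sum1_card big_mkcond.
rewrite exchange_big /= !(big_mkcond (fun h => h \in _)) /= -big_split /=.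
apply: leq_sum => h _.
rewrite !inE.
case Sh: (S h) => //.
case: (H h Sh) => [-> //| [i Bi]].
rewrite (bigD1 i) //= big_mkcond /= inE Bi /=.
by case: (Tp h).
Qed.

Lemma sum_exp_prod d (a : 'I_d -> RR) :
  \sum_(h : hc d) expR (\sum_j sgn (h j) * a j) = \prod_j (expR (a j) + expR (- a j)).
Proof.
have -> : \prod_j (expR (a j) + expR (- a j)) = \prod_j \sum_(b : bool) expR (sgn b * a j).
  by apply: eq_bigr => j _; rewrite big_bool /= mul1r mulN1r.
rewrite bigA_distr_bigA /=.
by apply: eq_bigr => h _; rewrite expR_sum.
Qed.

Lemma sum_exp_le d (a : 'I_d -> RR) :
  \sum_(h : hc d) expR (\sum_j sgn (h j) * a j) <= 2 ^+ d * expR (\sum_j a j ^+ 2 / 2).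
Proof.
rewrite sum_exp_prod expR_sum.
have -> : 2 ^+ d = \prod_(j < d) (2%:R : RR) by rewrite prodr_const card_ord.
rewrite -big_split /=.
apply: ler_prod => j _.
by rewrite addr_ge0 ?expR_ge0 ?cosh_leR.
Qed.

Lemma sumsq_scale d (a : 'I_d -> RR) (t : RR) :
  \sum_j a j ^+ 2 = 1 -> \sum_j (t * a j) ^+ 2 / 2 = t ^+ 2 / 2.
Proof.
move=> H; rewrite -mulr_suml.
under eq_bigr do rewrite exprMn.
by rewrite -mulr_sumr H mulr1.
Qed.

Lemma tail_bound d (a : 'I_d -> RR) (t : RR) : 0 <= t -> \sum_j a j ^+ 2 = 1 ->
  #|[pred h : hc d | t <= `|\sum_j sgn (h j) * a j|]|%:R
    <= 2 * 2 ^+ d * expR (- (t ^+ 2 / 2)).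
Proof.
move=> t0 Ha.
set A := [pred h : hc d | _].
have key : #|A|%:R * expR (t ^+ 2) <=
    \sum_(h : hc d) (expR (\sum_j sgn (h j) * (t * a j))
                    + expR (\sum_j sgn (h j) * (- (t * a j)))).
  rewrite -sum1_card natr_sum mulr_suml big_mkcond /=.
  apply: ler_sum => h _.
  case: ifP => hA; last by rewrite addr_ge0 ?expR_ge0.
  rewrite mul1r.
  have E1 : \sum_j sgn (h j) * (t * a j) = t * \sum_j sgn (h j) * a j.
    by rewrite mulr_sumr; apply: eq_bigr => j _; rewrite mulrCA.
  have E2 : \sum_j sgn (h j) * (- (t * a j)) = - (t * \sum_j sgn (h j) * a j).
    by rewrite -E1 -sumrN; apply: eq_bigr => j _; rewrite mulrN.
  rewrite E1 E2.
  move: hA; rewrite inE => hA.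
  set S := \sum_j sgn (h j) * a j in hA *.
  have le1 : t ^+ 2 <= t * `|S| by rewrite expr2 ler_wpM2l.
  case: (lerP 0 S) => S0.
  - rewrite ger0_norm // in le1.
    apply: le_trans (_ : expR (t * S) <= _); first by rewrite ler_expR.
    by rewrite lerDl expR_ge0.
  - rewrite ltr0_norm // in le1.
    apply: le_trans (_ : expR (- (t * S)) <= _); first by rewrite ler_expR -mulrN.
    by rewrite lerDr expR_ge0.
have up : \sum_(h : hc d) (expR (\sum_j sgn (h j) * (t * a j))
                    + expR (\sum_j sgn (h j) * (- (t * a j))))
          <= 2 * 2 ^+ d * expR (t ^+ 2 / 2).
  rewrite big_split /= -mulrA mulr_natl mulr2n.
  apply: lerD.
    by have := @sum_exp_le d (fun j => t * a j); rewrite (@sumsq_scale d a t Ha).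
  have E : \sum_j (- (t * a j)) ^+ 2 / 2 = t ^+ 2 / 2.
    by under eq_bigr do rewrite sqrrN; rewrite (@sumsq_scale d a t Ha).
  by have := @sum_exp_le d (fun j => - (t * a j)); rewrite E.
have := le_trans key up.
rewrite -ler_pdivlMr ?expR_gt0 // => H.
apply: le_trans H _.
have E : expR (t ^+ 2 / 2) / expR (t ^+ 2) = expR (- (t ^+ 2 / 2)).
  rewrite -expRN -expRD; congr expR; lra.
by rewrite -(mulrA (2 * 2 ^+ d)) E.
Qed.

Lemma coord_le d (z : 'I_d -> RR) j : `|z j| <= norm2 z.
Proof.
rewrite /norm2 -sqrtr_sqr ler_sqrt; last by apply: sumr_ge0 => i _; apply: sqr_ge0.
rewrite (bigD1 j) //= lerDl.
by apply: sumr_ge0 => i _; apply: sqr_ge0.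
Qed.

Lemma sum_abs_le d (z : 'I_d -> RR) : \sum_j `|z j| <= d%:R * norm2 z.
Proof.
apply: le_trans (_ : \sum_(j < d) norm2 z <= _).
  by apply: ler_sum => j _; apply: coord_le.
by rewrite sumr_const card_ord mulr_natl.
Qed.

Lemma ln_lb (x : RR) : 0 < x -> 1 - x^-1 <= ln x.
Proof.
move=> x0.
have xi0 : 0 < x^-1 by rewrite invr_gt0.
have := @le_ln1Dx _ (x^-1 - 1) ltac:(lra).
have -> : 1 + (x^-1 - 1) = x^-1 by lra.
rewrite lnV ?posrE //; lra.
Qed.

Lemma sgn_norm b : `|sgn b| = 1.
Proof. by case: b; rewrite /sgn ?normrN normr1. Qed.

Lemma s_big (delta : RR) d : 0 < delta -> delta < 1 -> (2 ^ 18 <= d)%N ->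
  128 <= s_par delta d.
Proof.
move=> dl0 dl1 dge.
have dR : 2 ^+ 18 <= d%:R :> RR by rewrite -natrX ler_nat.
have d1 : 1 <= d%:R :> RR by lra.
have sq : 2 ^+ 9 <= Num.sqrt (d%:R : RR).
  have -> : (2%:R : RR) ^+ 9 = Num.sqrt ((2 ^+ 9) ^+ 2).
    by rewrite sqrtr_sqr ger0_norm // exprn_ge0.
  by rewrite ler_sqrt; [rewrite -exprM | lra].
have pw : Num.sqrt (d%:R : RR) <= powR (d%:R) (1 - delta / 2).
  rewrite -powR12_sqrt; last lra.
  by apply: ler_powR => //; lra.
have ln2 : 2^-1 <= ln (d%:R : RR).
  apply: (@le_trans _ _ (1 - (d%:R : RR)^-1)); last by apply: ln_lb; lra.
  have : (d%:R : RR)^-1 <= 2^-1.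
    by rewrite lef_pV2 ?posrE; lra.
  lra.
rewrite /s_par.
have : 2 ^+ 9 * (2^-1 * 2^-1) <= powR (d%:R) (1 - delta / 2) * ln (d%:R) ^+ 2.
  rewrite expr2; apply: ler_pM; [lra | lra | lra |].
  by apply: ler_pM; lra.
lra.
Qed.

Lemma card_hc d : #|{: hc d}|%:R = (2%:R : RR) ^+ d.
Proof. by rewrite /hc card_ffun card_bool card_ord natrX. Qed.

Theorem lemma5p3 :
  exists c1 : RR, 0 < c1 /\
  forall (delta : RR), 0 < delta -> delta < 1 ->
  forall (k : nat -> nat),
    (exists eps : nat -> RR,
        (forall e : RR, 0 < e -> exists N : nat, forall m, (N <= m)%N -> `|eps m| < e) /\
        (forall d : nat, (2 <= d)%N -> (k d)%:R = powR (d%:R) (1 - delta - eps d))) ->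
  exists d0 : nat, forall d : nat, (d0 <= d)%N ->
  forall (n : nat) (P : protocol d (k d) n),
    1 / 2 <= prob_Av (fun Av => succeeds delta P Av.1 Av.2) ->
  forall A : mat d, A_suc delta P A ->
  forall (K : nat), K%:R <= expR (c1 * s_par delta d) ->
  forall y : 'I_K -> 'I_d -> RR, (forall i, norm2 (y i) = 1) ->
    1 / 8 <= prob_v (fun v =>
      (infnorm (mulAx A (xAv P A v)) <= xi' d) &&
      [forall i : 'I_K,
         (d%:R ^- 8 < norm2 (fun j => xAv P A v j - y i j))]).
Proof.
exists (1/8); split; first lra.
move=> delta dl0 dl1 k _.
exists (2 ^ 18)%N => d dge n P _ A HA K HK y Hy.
set s := s_par delta d.
have s128 : 128 <= s by apply: s_big.
have dR : 2 ^+ 18 <= d%:R :> RR by rewrite -natrX ler_nat.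
have d0 : 0 < d%:R :> RR by lra.
have ss : Num.sqrt s ^+ 2 = s by rewrite sqr_sqrtr //; lra.
have s4 : 4 <= Num.sqrt s.
  have := sqrtr_ge0 s; nra.
set t := Num.sqrt s - 1.
have t0 : 0 <= t by rewrite /t; lra.
have t2 : s / 2 <= t ^+ 2.
  have h4 : 0 <= (Num.sqrt s - 4) * Num.sqrt s by apply: mulr_ge0; lra.
  rewrite /t; nra.
have Hy2 : forall i, \sum_j y i j ^+ 2 = 1.
  move=> i; have := Hy i; rewrite /norm2 => E.
  by rewrite -(sqr_sqrtr (sumr_ge0 _ (fun j _ => sqr_ge0 (y i j)))) E expr1n.
have dd8 : d%:R * d%:R ^- 8 <= 1 :> RR.
  rewrite ler_pdivrMr ?exprn_gt0 // mul1r; apply: ler_eXnr => //; lra.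
have sqd0 : 0 < Num.sqrt (d%:R : RR) by rewrite sqrtr_gt0.
set B := fun (i : 'I_K) (h : hc d) => t <= `|\sum_j sgn (h j) * y i j|.
set Tgt := fun v : hc d => (infnorm (mulAx A (xAv P A v)) <= xi' d) &&
      [forall i : 'I_K, (d%:R ^- 8 < norm2 (fun j => xAv P A v j - y i j))].
have cover : forall h, succeeds delta P A h -> Tgt h \/ exists i, B i h.
  move=> h; rewrite /succeeds => /andP [Hinf Hdot].
  case Hf : [forall i : 'I_K, (d%:R ^- 8 < norm2 (fun j => xAv P A h j - y i j))].
    by left; rewrite /Tgt Hinf Hf.
  right; move/negbT/forallPn: Hf => [i]; rewrite -leNgt => Hi.
  exists i; rewrite /B.
  set x := xAv P A h in Hdot Hi *.
  set Sx := \sum_j sgn (h j) * x j.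
  set Sy := \sum_j sgn (h j) * y i j.
  have Edot : dotp (vec_of h) x = Sx / Num.sqrt (d%:R).
    rewrite /dotp /vec_of /Sx mulr_suml; apply: eq_bigr => j _.
    by rewrite mulrAC.
  rewrite Edot normrM normfV (ger0_norm (ltW sqd0)) -/s in Hdot.
  move: Hdot; rewrite ler_pdivlMr // -sqrtrM; last by apply: divr_ge0; lra.
  rewrite divfK; last by lra.
  move=> Hx.
  have Hdiff : `|Sx - Sy| <= 1.
    have -> : Sx - Sy = \sum_j sgn (h j) * (x j - y i j).
      by rewrite /Sx /Sy -sumrB; apply: eq_bigr => j _; rewrite mulrBr.
    apply: le_trans; first exact: ler_norm_sum.
    under eq_bigr do rewrite normrM sgn_norm mul1r.
    apply: le_trans (@sum_abs_le d (fun j => x j - y i j)) _.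
    apply: le_trans dd8.
    by apply: ler_wpM2l => //; lra.
  have := ler_normD Sy (Sx - Sy).
  rewrite addrC subrK.
  rewrite /t; lra.
have cnt := count_union _ _ _ _ _ cover.
set e := expR (- (t ^+ 2 / 2)).
have e0 : 0 <= e by apply: expR_ge0.
have Bb : forall i, #|[pred h | B i h]|%:R <= 2 * 2 ^+ d * e.
  by move=> i; apply: (@tail_bound d (y i) t t0 (Hy2 i)).
have Ke : K%:R * e <= 1 / 16.
  have h1 : e <= expR (- (s / 4)) by rewrite /e ler_expR; lra.
  have h2 : K%:R * e <= expR (1 / 8 * s) * expR (- (s / 4)).
    by apply: ler_pM => //.
  have h3 : expR (1 / 8 * s) * expR (- (s / 4)) = expR (- (s / 8)).
    by rewrite -expRD; congr expR; lra.
  have h4 : expR (- (s / 8)) * expR (s / 8) = 1.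
    by rewrite -expRD addNr expR0.
  have h5 := expR_ge1Dx (s / 8).
  have h6 := expR_ge0 (- (s / 8)).
  nra.
have sumB : \sum_i #|[pred h | B i h]|%:R <= K%:R * (2 * 2 ^+ d * e) :> RR.
  apply: le_trans (_ : \sum_(i < K) (2 * 2 ^+ d * e) <= _).
    by apply: ler_sum => i _; apply: Bb.
  by rewrite sumr_const card_ord (mulr_natl (2 * 2 ^+ d * e) K).
have cntR : #|[pred h | succeeds delta P A h]|%:R <=
    #|[pred h | Tgt h]|%:R + \sum_i #|[pred h | B i h]|%:R :> RR.
  by rewrite -natr_sum -natrD ler_nat.
move: HA; rewrite /A_suc /prob_v card_hc => HA.
have N0 : 0 < (2%:R : RR) ^+ d by apply: exprn_gt0; lra.
move: HA; rewrite ler_pdivlMr // ler_pdivlMr // => HA.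
have P1 : 2 ^+ d * (K%:R * e) <= 2 ^+ d * (1 / 16) :> RR by apply: ler_wpM2l; lra.
have E : K%:R * (2 * 2 ^+ d * e) = 2 * (2 ^+ d * (K%:R * e)) :> RR by ring.
rewrite E in sumB.
lra.
Qed.
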